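(* Let $c\in\mathbb{R}$ and let $\kappa:(c,\infty)\to\mathbb{R}$ be a function which is bounded from above with $\kappa(x)\to0$ as $x\to\infty$. Then $\kappa$ has a majorant $\gamma:(c,\infty)\to\mathbb{R}$ (i.e. $\gamma\ge\kappa$) of class $C^\infty$ such that $\gamma(x)\to0$ as $x\to\infty$ and $$(-1)^k\gamma^{(k)}(x)\ge0,\qquad x>c,\ k=0,1,2,\dots.$$ *)

(* Defs.v *)
From Stdlib Require Export Reals.
From Coquelicot Require Export Coquelicot.
Open Scope R_scope.

Definition smooth_on_right (c : R) (g : R -> R) : Prop :=
  forall (k : nat) (x : R), c < x -> ex_derive_n g k x.

(* Main.v *)
Require Import Defs.
From Stdlib Require Import Reals Lra Lia.
From Coquelicot Require Import Coquelicot.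
Open Scope R_scope.

Definition aa (K : R) (j : nat) : R := 2 * K * (/2) ^ j.
Definition tt (K c : R) (b : nat -> R) (k j : nat) (x : R) : R :=
  aa K j * (- b j) ^ k * exp (- b j * (x - c)).
Definition GG (K c : R) (b : nat -> R) (k : nat) (x : R) : R :=
  Series (fun j => tt K c b k j x).

Lemma exp_le' x y : x <= y -> exp x <= exp y.
Proof. intros [H|H]. apply Rlt_le, exp_increasing, H. subst; lra. Qed.

Lemma aa_nonneg K j : 0 <= K -> 0 <= aa K j.
Proof. intros; unfold aa. apply Rmult_le_pos; [lra|]. apply pow_le; lra. Qed.

Lemma ex_series_aa K C : ex_series (fun j => aa K j * C).
Proof.
  apply (ex_series_ext (fun j => (/2)^j * (2*K*C))).
  { intro j; unfold aa. change ((/2)^j*(2*K*C) = 2*K*(/2)^j*C). ring. }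
  apply ex_series_scal_r, ex_series_geom. rewrite Rabs_pos_eq; lra.
Qed.

Lemma tt_bound K c b k j y : 0 <= K -> (forall j, 0 < b j <= 1) ->
  Rabs (tt K c b k j y) <= aa K j * exp (Rabs y + Rabs c).
Proof.
  intros HK Hb. unfold tt. specialize (Hb j).
  rewrite !Rabs_mult, (Rabs_pos_eq (aa K j)) by (apply aa_nonneg; auto).
  rewrite (Rabs_pos_eq (exp _)) by (apply Rlt_le, exp_pos).
  rewrite <- RPow_abs, Rabs_Ropp, Rabs_pos_eq by lra.
  assert (H1 : b j ^ k <= 1) by (rewrite <- (pow1 k); apply pow_incr; lra).
  assert (H2 : exp (- b j * (y - c)) <= exp (Rabs y + Rabs c)).
  { apply exp_le'.
    assert (Rabs (y - c) <= Rabs y + Rabs c).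
    { unfold Rminus. eapply Rle_trans; [apply Rabs_triang|]. rewrite Rabs_Ropp; lra. }
    assert (- (y - c) <= Rabs (y - c)) by (rewrite <- Rabs_Ropp; apply RRle_abs).
    assert (y - c <= Rabs (y - c)) by apply RRle_abs.
    nra. }
  assert (0 <= aa K j) by (apply aa_nonneg; auto).
  assert (0 <= b j ^ k) by (apply pow_le; lra).
  assert (0 < exp (- b j * (y - c))) by apply exp_pos.
  rewrite Rmult_assoc; apply Rmult_le_compat_l; [auto|].
  rewrite <- (Rmult_1_l (exp (_ + _))); apply Rmult_le_compat; lra.
Qed.

Lemma ex_series_tt K c b k y : 0 <= K -> (forall j, 0 < b j <= 1) ->
  ex_series (fun j => tt K c b k j y).
Proof.
  intros HK Hb. apply (@ex_series_le R_AbsRing R_CompleteNormedModule) with (fun j => aa K j * exp (Rabs y + Rabs c)).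
  - intro j. apply tt_bound; auto.
  - apply ex_series_aa.
Qed.

Lemma tt_derive K c b k j y :
  is_derive (tt K c b k j) y (tt K c b (S k) j y).
Proof.
  unfold tt. auto_derive; [auto|].
  assert (E : forall z : R, aa K j * (- b j) ^ k * (- b j * 1 * exp (- b j * (z + - c))) =
    aa K j * (- b j) ^ S k * exp (- b j * (z - c))).
  { intro z. simpl. unfold Rminus. ring. }
  apply E.
Qed.

Lemma SP_derive K c b k n y :
  derivable_pt_lim (SP (tt K c b k) n) y (SP (tt K c b (S k)) n y).
Proof.
  apply is_derive_Reals. unfold SP. induction n.
  - simpl. apply tt_derive.
  - simpl. apply (is_derive_plus (fun x => sum_f_R0 (fun k0 => tt K c b k k0 x) n) (fun x => tt K c b k (S n) x)); [apply IHn|apply tt_derive].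
Qed.

Lemma GG_derive K c b k x : 0 <= K -> (forall j, 0 < b j <= 1) ->
  is_derive (GG K c b k) x (GG K c b (S k) x).
Proof.
  intros HK Hb.
  assert (Hr : 0 < Rabs x + 1) by (pose proof (Rabs_pos x); lra).
  set (r := mkposreal _ Hr).
  set (An := fun j => aa K j * exp (r + Rabs c)).
  assert (CVN : CVN_r (tt K c b (S k)) r).
  { exists An. exists (Series An). split.
    - assert (Hs : is_series (fun j => Rabs (An j)) (Series An)).
      { apply is_series_ext with An.
        + intro j. unfold An. rewrite (Rabs_pos_eq (aa K j * _)); [reflexivity|].
          apply Rmult_le_pos; [apply aa_nonneg; auto| apply Rlt_le, exp_pos].
        + apply Series_correct, ex_series_aa. }
      apply is_series_Reals in Hs. exact Hs.
    - intros n y Hy. unfold Boule in Hy. rewrite Rminus_0_r in Hy.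
      eapply Rle_trans; [apply tt_bound; auto|]. unfold An.
      apply Rmult_le_compat_l; [apply aa_nonneg; auto|]. apply exp_le'.
      unfold r in *; simpl in *; lra. }
  destruct (CVN_CVU_r _ r CVN x) as [e He].
  { simpl. lra. }
  apply is_derive_Reals.
  apply (CVU_derivable (SP (tt K c b k)) (SP (tt K c b (S k))) (GG K c b k) (GG K c b (S k)) x e He).
  - intros y _. pose proof (Series_correct _ (ex_series_tt K c b k y HK Hb)) as H.
    apply is_series_Reals in H. exact H.
  - intros n y _. apply SP_derive.
  - unfold Boule. rewrite Rminus_eq_0, Rabs_R0. apply cond_pos.
Qed.

Lemma GG_Derive_n K c b k x : 0 <= K -> (forall j, 0 < b j <= 1) ->
  Derive_n (GG K c b 0) k x = GG K c b k x /\ ex_derive_n (GG K c b 0) k x.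
Proof.
  intros HK Hb. revert x. induction k; intro x.
  - split; reflexivity || (simpl; exact I).
  - assert (E : forall t, Derive_n (GG K c b 0) k t = GG K c b k t) by (intro; apply IHk).
    split.
    + simpl. rewrite (Derive_ext _ _ _ E). apply is_derive_unique, GG_derive; auto.
    + simpl. apply ex_derive_ext with (GG K c b k).
      * intro t. symmetry. apply E.
      * eexists. apply GG_derive; auto.
Qed.

Lemma Series_nonneg a : (forall n, 0 <= a n) -> ex_series a -> 0 <= Series a.
Proof.
  intros Ha Hex.
  replace 0 with (Series (fun n => 0 * a n)).
  - apply Series_le; auto. intro n; specialize (Ha n); lra.
  - rewrite Series_scal_l; ring.
Qed.

Lemma Series_ge_term a j : (forall n, 0 <= a n) -> ex_series a -> a j <= Series a.
Proof.
  intros Ha Hex. rewrite (Series_incr_n a (S j)) by (lia || auto).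
  simpl Init.Nat.pred.
  assert (0 <= Series (fun k => a (S j + k)%nat)).
  { apply Series_nonneg; [intro; auto|]. apply (ex_series_incr_n a (S j)); auto. }
  assert (a j <= sum_f_R0 a j).
  { destruct j; simpl; [lra|]. pose proof (cond_pos_sum a j Ha). lra. }
  lra.
Qed.

Lemma tt_nonneg K c b k j x : 0 <= K -> (forall j, 0 < b j <= 1) ->
  0 <= (-1) ^ k * tt K c b k j x.
Proof.
  intros HK Hb. unfold tt.
  assert (E : (-1) ^ k * (aa K j * (- b j) ^ k * exp (- b j * (x - c)))
     = aa K j * ((-1) * (- b j)) ^ k * exp (- b j * (x - c))).
  { rewrite Rpow_mult_distr. ring. }
  rewrite E. replace (-1 * - b j) with (b j) by ring.
  specialize (Hb j).
  apply Rmult_le_pos; [apply Rmult_le_pos; [apply aa_nonneg; auto| apply pow_le; lra]|].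
  apply Rlt_le, exp_pos.
Qed.

Lemma GG_sign K c b k x : 0 <= K -> (forall j, 0 < b j <= 1) ->
  0 <= (-1) ^ k * GG K c b k x.
Proof.
  intros HK Hb. unfold GG. rewrite <- Series_scal_l.
  apply Series_nonneg.
  - intro; apply tt_nonneg; auto.
  - apply (ex_series_ext (fun n => tt K c b k n x * (-1)^k)).
    + intro n. change (tt K c b k n x * (-1)^k = (-1)^k * tt K c b k n x). ring.
    + apply ex_series_scal_r, ex_series_tt; auto.
Qed.

Lemma term_small K c b j : 0 <= K -> (forall j, 0 < b j <= 1) ->
  forall eps, 0 < eps -> exists M, forall x, M < x -> tt K c b 0 j x < eps.
Proof.
  intros HK Hb eps He. specialize (Hb j).
  pose proof (aa_nonneg K j HK).
  exists (c + aa K j / (eps * b j)). intros x Hx.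
  unfold tt. simpl. rewrite Rmult_1_r.
  assert (Hu : b j * (x - c) > aa K j / eps).
  { assert (aa K j / (eps * b j) < x - c) by lra.
    apply Rmult_lt_compat_l with (r := b j) in H0; [|lra].
    replace (b j * (aa K j / (eps * b j))) with (aa K j / eps) in H0 by (field; lra).
    lra. }
  replace (- b j * (x - c)) with (- (b j * (x - c))) by ring.
  rewrite exp_Ropp.
  pose proof (exp_ineq1_le (b j * (x - c))).
  set (u := b j * (x - c)) in *.
  assert (Hu2 : aa K j < eps * u).
  { apply Rmult_lt_compat_l with (r := eps) in Hu; [|lra].
    replace (eps * (aa K j / eps)) with (aa K j) in Hu by (field; lra). lra. }
  assert (0 < exp u) by apply exp_pos.
  apply Rmult_lt_reg_r with (exp u); [auto|].
  rewrite Rmult_assoc, Rinv_l by lra. nra.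
Qed.

Lemma partial_small K c b N : 0 <= K -> (forall j, 0 < b j <= 1) ->
  forall eps, 0 < eps -> exists M, forall x, M < x ->
    sum_f_R0 (fun j => tt K c b 0 j x) N < eps.
Proof.
  intros HK Hb. induction N; intros eps He.
  - simpl. apply term_small; auto.
  - destruct (IHN (eps/2)) as [M1 H1]; [lra|].
    destruct (term_small K c b (S N) HK Hb (eps/2)) as [M2 H2]; [lra|].
    exists (Rmax M1 M2). intros x Hx. simpl.
    assert (M1 < x) by (eapply Rle_lt_trans; [apply Rmax_l|eauto]).
    assert (M2 < x) by (eapply Rle_lt_trans; [apply Rmax_r|eauto]).
    specialize (H1 x H). specialize (H2 x H0). lra.
Qed.

Lemma GG_lim K c b : 0 <= K -> (forall j, 0 < b j <= 1) ->
  is_lim (GG K c b 0) p_infty 0.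
Proof.
  intros HK Hb. apply is_lim_spec. intro eps. simpl.
  assert (Hy : 0 < eps / (2 * (2 * K + 1))) by (apply Rdiv_lt_0_compat; [apply cond_pos|lra]).
  destruct (pow_lt_1_zero (/2) ltac:(rewrite Rabs_pos_eq; lra) _ Hy) as [N HN].
  specialize (HN N (le_n N)). rewrite Rabs_pos_eq in HN by (apply pow_le; lra).
  destruct (partial_small K c b N HK Hb (eps/2)) as [M HM]; [pose proof (cond_pos eps); lra|].
  exists (Rmax M c). intros x Hx.
  assert (HxM : M < x) by (eapply Rle_lt_trans; [apply Rmax_l|eauto]).
  assert (Hxc : c < x) by (eapply Rle_lt_trans; [apply Rmax_r|eauto]).
  assert (Hnn : forall j, 0 <= tt K c b 0 j x).
  { intro j. pose proof (tt_nonneg K c b 0 j x HK Hb). simpl in H. lra. }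
  assert (Hex := ex_series_tt K c b 0 x HK Hb).
  assert (H0 : 0 <= GG K c b 0 x) by (apply Series_nonneg; auto).
  rewrite Rminus_0_r, Rabs_pos_eq by auto.
  unfold GG. rewrite (Series_incr_n _ (S N)) by (lia || auto). simpl Init.Nat.pred.
  specialize (HM x HxM).
  set (C := 2 * K * (/2) ^ (S N)).
  assert (Htail : Series (fun k => tt K c b 0 (S N + k) x) <= Series (fun i => (/2) ^ i * C)).
  { apply Series_le.
    - intro i. split; [apply Hnn|]. unfold tt, C, aa. simpl ((- b (S N + i)%nat) ^ 0).
      rewrite pow_add. specialize (Hb (S N + i)%nat).
      assert (exp (- b (S N + i)%nat * (x - c)) <= 1).
      { rewrite <- exp_0. apply exp_le'. nra. }
      assert (0 <= (/2) ^ S N) by (apply pow_le; lra).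
      assert (0 <= (/2) ^ i) by (apply pow_le; lra).
      assert (0 <= 2 * K * ((/2) ^ S N * (/2) ^ i)).
      { apply Rmult_le_pos; [lra|]. apply Rmult_le_pos; lra. }
      assert (0 < exp (- b (S N + i)%nat * (x - c))) by apply exp_pos.
      pose proof (Rmult_le_compat_l _ _ _ H3 H) as H5. lra.
    - apply ex_series_scal_r, ex_series_geom. rewrite Rabs_pos_eq; lra. }
  rewrite Series_scal_r, Series_geom in Htail by (rewrite Rabs_pos_eq; lra).
  assert (HC : / (1 - / 2) * C = 2 * K * (/2) ^ N) by (unfold C; simpl; field).
  rewrite HC in Htail.
  assert (2 * K * (/ 2) ^ N < eps / 2).
  { assert ((2 * K + 1) * (/2)^N < eps / 2).
    { apply Rmult_lt_compat_l with (r := 2 * K + 1) in HN; [|lra].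
      replace ((2 * K + 1) * (eps / (2 * (2 * K + 1)))) with (eps / 2) in HN by (field; lra).
      lra. }
    assert (0 <= (/2)^N) by (apply pow_le; lra). nra. }
  lra.
Qed.

From Stdlib Require Import IndefiniteDescription.

Lemma exp_half : / 2 <= exp (- / 2).
Proof.
  assert (E : exp (/2) * exp (/2) = exp 1) by (rewrite <- exp_plus; f_equal; field).
  pose proof exp_le_3. pose proof (exp_pos (/2)).
  assert (exp (/2) <= 2) by nra.
  rewrite exp_Ropp. apply Rinv_le_contravar; lra.
Qed.

Theorem claim8p3 (c : R) (kappa : R -> R)
  (hbdd : exists M : R, forall x : R, c < x -> kappa x <= M)
  (hlim : is_lim kappa p_infty 0) :
  exists gamma : R -> R,
    smooth_on_right c gamma /\
    (forall x : R, c < x -> kappa x <= gamma x) /\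
    is_lim gamma p_infty 0 /\
    (forall (k : nat) (x : R), c < x -> 0 <= (-1) ^ k * Derive_n gamma k x).
Proof.
  destruct hbdd as [M HM].
  set (K := Rmax M 1).
  assert (HK1 : 1 <= K) by apply Rmax_r.
  assert (HMK : M <= K) by apply Rmax_l.
  assert (HK : 0 <= K) by lra.
  assert (HX : forall j : nat, exists X, c <= X /\ forall x, X < x -> kappa x <= K * (/2) ^ j).
  { intro j. apply is_lim_spec in hlim.
    assert (Hp : 0 < K * (/2) ^ j) by (apply Rmult_lt_0_compat; [lra|apply pow_lt; lra]).
    destruct (hlim (mkposreal _ Hp)) as [N HN].
    exists (Rmax N c). split; [apply Rmax_r|]. intros x Hx.
    assert (N < x) by (eapply Rle_lt_trans; [apply Rmax_l|eauto]).
    specialize (HN x H). simpl in HN. rewrite Rminus_0_r in HN.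
    pose proof (RRle_abs (kappa x)). lra. }
  set (Xf := fun j => proj1_sig (constructive_indefinite_description _ (HX j))).
  assert (HXf : forall j, c <= Xf j /\ forall x, Xf j < x -> kappa x <= K * (/2) ^ j).
  { intro j. unfold Xf. destruct (constructive_indefinite_description _ (HX j)) as [X HX']. exact HX'. }
  set (X := fun j => match j with O => c | S _ => Xf j end).
  assert (PX : forall j x, c < x -> X j < x -> kappa x <= K * (/2) ^ j).
  { intros [|j] x Hc Hx; simpl in *.
    - specialize (HM x Hc). lra.
    - apply (proj2 (HXf (S j))). exact Hx. }
  assert (HXc : forall j, c <= X j).
  { intros [|j]; simpl; [lra|apply HXf]. }
  set (b := fun j => / (2 * (X (S j) - c) + 1)).
  assert (Hb : forall j, 0 < b j <= 1).
  { intro j. unfold b. specialize (HXc (S j)). split.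
    - apply Rinv_0_lt_compat; lra.
    - rewrite <- Rinv_1. apply Rinv_le_contravar; lra. }
  exists (GG K c b 0). split; [|split; [|split]].
  - intros k x _. apply GG_Derive_n; auto.
  - intros x Hx.
    assert (Hnn : forall j, 0 <= tt K c b 0 j x).
    { intro j. pose proof (tt_nonneg K c b 0 j x HK Hb). simpl in H. lra. }
    assert (Hex := ex_series_tt K c b 0 x HK Hb).
    destruct (Rle_dec (kappa x) 0) as [Hk|Hk].
    { pose proof (Series_nonneg _ Hnn Hex). unfold GG. lra. }
    apply Rnot_le_lt in Hk.
    assert (Hy : 0 < kappa x / K) by (apply Rdiv_lt_0_compat; lra).
    destruct (pow_lt_1_zero (/2) ltac:(rewrite Rabs_pos_eq; lra) _ Hy) as [n Hn].
    specialize (Hn n (le_n n)). rewrite Rabs_pos_eq in Hn by (apply pow_le; lra).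
    assert (Hxn : x <= X n).
    { destruct (Rle_dec x (X n)) as [h|h]; [auto|].
      apply Rnot_le_lt in h. specialize (PX n x Hx h).
      apply Rmult_lt_compat_l with (r := K) in Hn; [|lra].
      replace (K * (kappa x / K)) with (kappa x) in Hn by (field; lra). lra. }
    assert (Hj : exists j, X j < x /\ x <= X (S j)).
    { clear Hn Hy. induction n.
      - simpl in Hxn. lra.
      - destruct (Rle_dec x (X n)) as [h|h]; [auto|].
        exists n. split; [lra|auto]. }
    destruct Hj as [j [Hj1 Hj2]].
    specialize (PX j x Hx Hj1).
    eapply Rle_trans; [exact PX|].
    eapply Rle_trans; [|apply (Series_ge_term _ j Hnn Hex)].
    unfold tt, aa. simpl ((- b j) ^ 0).
    assert (Hbx : b j * (x - c) <= / 2).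
    { unfold b. specialize (HXc (S j)).
      apply Rmult_le_reg_l with (2 * (X (S j) - c) + 1); [lra|].
      rewrite <- Rmult_assoc, Rinv_r by lra. lra. }
    assert (HE : / 2 <= exp (- b j * (x - c))).
    { eapply Rle_trans; [apply exp_half|]. apply exp_le'. lra. }
    assert (0 <= K * (/2) ^ j) by (apply Rmult_le_pos; [lra|apply pow_le; lra]).
    nra.
  - apply GG_lim; auto.
  - intros k x _. destruct (GG_Derive_n K c b k x HK Hb) as [E _].
    rewrite E. apply GG_sign; auto.
Qed.
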